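(* Let $\mathcal E_i\equiv1\to H_i\xrightarrow{\alpha_i}G_i\xrightarrow{\beta_i}K_i\to1$ ($i=1,2$) be central extensions of multiplicative Lie algebras that are isoclinic via $(\lambda,\mu)$. Then: (1) $\lambda(\beta_1(x))=\beta_2(\mu(x))$ for all $x\in{}^M[G_1,G_1]$; (2) $\mu({}^M[x,g_1])={}^M[\mu(x),g_2]$ for all $x\in{}^M[G_1,G_1]$, $g_1\in G_1$ and $g_2\in G_2$ with $\lambda(\beta_1(g_1))=\beta_2(g_2)$, where ${}^M[a,b]:=(a\star b)[a,b]$; (3) $\mu(\alpha_1(H_1)\cap{}^M[G_1,G_1])=\alpha_2(H_2)\cap{}^M[G_2,G_2]$.
   Context: A multiplicative Lie algebra is a group $(G,\cdot)$ with a binary operation $\star$ such that for all $x,y,z\in G$: $x\star x=1$; $x\star(yz)=(x\star y)\,{}^y(x\star z)$; $(xy)\star z={}^x(y\star z)(x\star z)$; $((x\star y)\star{}^yz)((y\star z)\star{}^zx)((z\star x)\star{}^xy)=1$; ${}^z(x\star y)={}^zx\star{}^zy$, where ${}^xy=xyx^{-1}$. $Z(G)$ is the group center, $LZ(G)=\{x: x\star y=1\ \forall y\}$, $\mathcal Z(G)=LZ(G)\cap Z(G)$; $[x,y]$ is the group commutator; ${}^M[G,G]=(G\star G)[G,G]$ with $G\star G$ the ideal generated by all $a\star b$. A central extension is a short exact sequence $1\to H\xrightarrow{\alpha}G\xrightarrow{\beta}K\to1$ of multiplicative Lie algebras with $\alpha(H)\subseteq\mathcal Z(G)$. Central extensions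 $\mathcal E_1,\mathcal E_2$ are isoclinic via $(\lambda,\mu)$ if $\lambda:K_1\to K_2$, $\mu:{}^M[G_1,G_1]\to{}^M[G_2,G_2]$ are multiplicative Lie algebra isomorphisms with $\mu([g,g'])=[h,h']$ and $\mu(g\star g')=h\star h'$ whenever $g,g'\in G_1$, $h,h'\in G_2$ satisfy $\beta_2(h)=\lambda\beta_1(g)$, $\beta_2(h')=\lambda\beta_1(g')$. *)

(* Defs.v *)
Set Implicit Arguments.

(* A multiplicative Lie algebra: a group (carrier, mul, one, inv) with a
   binary operation star satisfying the five axioms of the paper.
   Conjugation: ^x y = x y x^{-1}. *)
Record MLA := {
  carrier :> Type;
  mul : carrier -> carrier -> carrier;
  one : carrier;
  inv : carrier -> carrier;
  star : carrier -> carrier -> carrier;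
  mulA : forall x y z, mul x (mul y z) = mul (mul x y) z;
  mul1g : forall x, mul one x = x;
  mulVg : forall x, mul (inv x) x = one;
  star_xx : forall x, star x x = one;
  star_mulr : forall x y z,
    star x (mul y z) = mul (star x y) (mul (mul y (star x z)) (inv y));
  star_mull : forall x y z,
    star (mul x y) z = mul (mul (mul x (star y z)) (inv x)) (star x z);
  star_jacobi : forall x y z,
    mul (mul (star (star x y) (mul (mul y z) (inv y)))
             (star (star y z) (mul (mul z x) (inv z))))
        (star (star z x) (mul (mul x y) (inv x))) = one;
  star_conj : forall x y z,
    mul (mul z (star x y)) (inv z)
    = star (mul (mul z x) (inv z)) (mul (mul z y) (inv z))
}.

Arguments mul {m}.
Arguments inv {m}.
Arguments star {m}.
Arguments one m : clear implicits.

Section Defs.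
Context {G : MLA}.

Definition conj (x y : G) : G := mul (mul x y) (inv x).
Definition comm (x y : G) : G := mul (mul (mul x y) (inv x)) (inv y).
Definition Mbr (a b : G) : G := mul (star a b) (comm a b).

Definition is_subgroup (S : G -> Prop) : Prop :=
  S (one G) /\ (forall x y, S x -> S y -> S (mul x y)) /\ (forall x, S x -> S (inv x)).

Definition is_ideal (S : G -> Prop) : Prop :=
  is_subgroup S /\ (forall g s, S s -> S (conj g s)) /\ (forall g s, S s -> S (star g s)).

Definition star_ideal (x : G) : Prop :=
  forall S, is_ideal S -> (forall a b, S (star a b)) -> S x.

Definition comm_subgroup (x : G) : Prop :=
  forall S, is_subgroup S -> (forall a b, S (comm a b)) -> S x.

Definition Mcomm (x : G) : Prop :=
  exists a b, star_ideal a /\ comm_subgroup b /\ x = mul a b.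

Definition in_center (x : G) : Prop := forall y, mul x y = mul y x.
Definition in_LZ (x : G) : Prop := forall y, star x y = one G.
Definition in_MZ (x : G) : Prop := in_LZ x /\ in_center x.
End Defs.

Definition is_hom {G1 G2 : MLA} (f : G1 -> G2) : Prop :=
  (forall x y, f (mul x y) = mul (f x) (f y)) /\
  (forall x y, f (star x y) = star (f x) (f y)).

Definition is_iso {G1 G2 : MLA} (f : G1 -> G2) : Prop :=
  is_hom f /\ (forall x y, f x = f y -> x = y) /\ (forall y, exists x, f x = y).

Definition central_ext {H G K : MLA} (a : H -> G) (b : G -> K) : Prop :=
  is_hom a /\ is_hom b /\
  (forall x y, a x = a y -> x = y) /\
  (forall k, exists g, b g = k) /\
  (forall g, b g = one K <-> exists h, a h = g) /\
  (forall h, in_MZ (a h)).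

(* mu : ^M[G1,G1] -> ^M[G2,G2] is an isomorphism of multiplicative Lie algebras,
   represented as a function G1 -> G2 whose values outside ^M[G1,G1] are irrelevant *)
Definition Mcomm_iso {G1 G2 : MLA} (mu : G1 -> G2) : Prop :=
  (forall x, Mcomm x -> Mcomm (mu x)) /\
  (forall x y, Mcomm x -> Mcomm y -> mu (mul x y) = mul (mu x) (mu y)) /\
  (forall x y, Mcomm x -> Mcomm y -> mu (star x y) = star (mu x) (mu y)) /\
  (forall x y, Mcomm x -> Mcomm y -> mu x = mu y -> x = y) /\
  (forall y, Mcomm y -> exists x, Mcomm x /\ mu x = y).

Definition isoclinic {H1 G1 K1 H2 G2 K2 : MLA}
  (a1 : H1 -> G1) (b1 : G1 -> K1) (a2 : H2 -> G2) (b2 : G2 -> K2)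
  (lam : K1 -> K2) (mu : G1 -> G2) : Prop :=
  is_iso lam /\ Mcomm_iso mu /\
  (forall (g g' : G1) (h h' : G2),
     b2 h = lam (b1 g) -> b2 h' = lam (b1 g') ->
     mu (comm g g') = comm h h' /\ mu (star g g') = star h h').

(* Main.v *)
Require Import Defs.

Section Grp.
Variable G : MLA.
Implicit Types x y z a b g : G.

Lemma mulgV x : mul x (inv x) = one G.
Proof.
  transitivity (mul (mul (inv (inv x)) (inv x)) (mul x (inv x))).
  { rewrite mulVg. symmetry. apply mul1g. }
  rewrite <- mulA. rewrite (mulA G (inv x) x). rewrite mulVg, mul1g. apply mulVg.
Qed.

Lemma mulg1 x : mul x (one G) = x.
Proof. rewrite <- (mulVg G x), mulA, mulgV. apply mul1g. Qed.

Lemma inv_uniq x y : mul x y = one G -> x = inv y.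
Proof.
  intro H. rewrite <- (mulg1 x), <- (mulgV y), mulA, H. apply mul1g.
Qed.

Lemma mulK x y z : mul x y = mul x z -> y = z.
Proof.
  intro H. rewrite <- (mul1g G y), <- (mul1g G z), <- (mulVg G x), <- !mulA, H.
  reflexivity.
Qed.

Lemma invM x y : inv (mul x y) = mul (inv y) (inv x).
Proof.
  symmetry. apply inv_uniq.
  rewrite <- mulA, (mulA G (inv x)), mulVg, mul1g. apply mulVg.
Qed.

Lemma invK x : inv (inv x) = x.
Proof. symmetry. apply inv_uniq. apply mulgV. Qed.

Inductive gen (P : G -> Prop) : G -> Prop :=
| g_base x : P x -> gen P x
| g_one : gen P (one G)
| g_mul x y : gen P x -> gen P y -> gen P (mul x y)
| g_inv x : gen P x -> gen P (inv x).

Definition Pstar x := exists a b, x = star a b.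
Definition Pcomm x := exists a b, x = comm a b.

Lemma conj_mul g x y : conj g (mul x y) = mul (conj g x) (conj g y).
Proof.
  unfold conj. rewrite !mulA. f_equal. rewrite <- !mulA. f_equal. f_equal.
  rewrite mulA, mulVg, mul1g. reflexivity.
Qed.

Lemma conj_one g : conj g (one G) = one G.
Proof. unfold conj. rewrite mulg1. apply mulgV. Qed.

Lemma conj_inv g x : conj g (inv x) = inv (conj g x).
Proof.
  apply inv_uniq. rewrite <- conj_mul, mulVg. apply conj_one.
Qed.

Lemma gen_stars_ideal : is_ideal (gen Pstar).
Proof.
  split; [split; [constructor 2 | split; [constructor 3; auto | constructor 4; auto]] | split].
  - intros g s Hs. induction Hs as [x [a [b ->]]| |x y _ IH1 _ IH2|x _ IH].
    + constructor 1. exists (conj g a), (conj g b). unfold conj. apply star_conj.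
    + rewrite conj_one. constructor 2.
    + rewrite conj_mul. constructor 3; auto.
    + rewrite conj_inv. constructor 4; auto.
  - intros g s _. constructor 1. exists g, s. reflexivity.
Qed.

Lemma star_ideal_gen x : star_ideal x -> gen Pstar x.
Proof.
  intro H. apply H. apply gen_stars_ideal. intros a b. constructor 1. exists a, b; reflexivity.
Qed.

Lemma comm_subgroup_gen x : comm_subgroup x -> gen Pcomm x.
Proof.
  intro H. apply H.
  - split; [constructor 2 | split; [constructor 3; auto | constructor 4; auto]].
  - intros a b. constructor 1. exists a, b; reflexivity.
Qed.

Lemma star_ideal_mul x y : star_ideal x -> star_ideal y -> star_ideal (mul x y).
Proof. intros Hx Hy S HS Hb. specialize (Hx S HS Hb). specialize (Hy S HS Hb). destruct HS as [[_ [Hm _]] _]. apply Hm; auto. Qed.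
Lemma star_ideal_inv x : star_ideal x -> star_ideal (inv x).
Proof. intros Hx S HS Hb. specialize (Hx S HS Hb). destruct HS as [[_ [_ Hi]] _]. apply Hi; auto. Qed.
Lemma star_ideal_conj g x : star_ideal x -> star_ideal (conj g x).
Proof. intros Hx S HS Hb. specialize (Hx S HS Hb). destruct HS as [_ [Hc _]]. apply Hc; auto. Qed.
Lemma star_ideal_one : @star_ideal G (one G).
Proof. intros S HS Hb. apply HS. Qed.
Lemma star_ideal_star a b : star_ideal (star a b).
Proof. intros S HS Hb. apply Hb. Qed.
Lemma comm_subgroup_mul x y : comm_subgroup x -> comm_subgroup y -> comm_subgroup (mul x y).
Proof. intros Hx Hy S HS Hb. specialize (Hx S HS Hb). specialize (Hy S HS Hb). destruct HS as [_ [Hm _]]. apply Hm; auto. Qed.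
Lemma comm_subgroup_inv x : comm_subgroup x -> comm_subgroup (inv x).
Proof. intros Hx S HS Hb. specialize (Hx S HS Hb). destruct HS as [_ [_ Hi]]. apply Hi; auto. Qed.
Lemma comm_subgroup_one : @comm_subgroup G (one G).
Proof. intros S HS Hb. apply HS. Qed.
Lemma comm_subgroup_comm a b : comm_subgroup (comm a b).
Proof. intros S HS Hb. apply Hb. Qed.

Lemma Mcomm_one : @Mcomm G (one G).
Proof. exists (one G), (one G). split; [apply star_ideal_one|split; [apply comm_subgroup_one|]].
  symmetry; apply mulg1. Qed.
Lemma Mcomm_star a b : Mcomm (star a b).
Proof. exists (star a b), (one G). split; [apply star_ideal_star|split; [apply comm_subgroup_one|]].
  symmetry; apply mulg1. Qed.
Lemma Mcomm_comm a b : Mcomm (comm a b).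
Proof. exists (one G), (comm a b). split; [apply star_ideal_one|split; [apply comm_subgroup_comm|]].
  symmetry; apply mul1g. Qed.
Lemma Mcomm_mul x y : Mcomm x -> Mcomm y -> Mcomm (mul x y).
Proof.
  intros [a [b [Ha [Hb ->]]]] [a' [b' [Ha' [Hb' ->]]]].
  exists (mul a (conj b a')), (mul b b'). split; [|split].
  - apply star_ideal_mul; auto. apply star_ideal_conj; auto.
  - apply comm_subgroup_mul; auto.
  - unfold conj. rewrite <- !mulA. rewrite (mulA G (inv b) b), mulVg, mul1g. reflexivity.
Qed.
Lemma Mcomm_inv x : Mcomm x -> Mcomm (inv x).
Proof.
  intros [a [b [Ha [Hb ->]]]]. exists (conj (inv b) (inv a)), (inv b). split; [|split].
  - apply star_ideal_conj, star_ideal_inv; auto.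
  - apply comm_subgroup_inv; auto.
  - unfold conj. rewrite invK, invM, <- !mulA, mulgV, mulg1. reflexivity.
Qed.

End Grp.
Arguments gen {G}. Arguments mulgV {G}. Arguments mulg1 {G}. Arguments inv_uniq {G}. Arguments mulK {G}.
Arguments invM {G}. Arguments invK {G}. Arguments conj_mul {G}. Arguments conj_one {G}.
Arguments conj_inv {G}. Arguments star_ideal_gen {G}. Arguments comm_subgroup_gen {G}.
Arguments Mcomm_one {G}. Arguments Mcomm_star {G}. Arguments Mcomm_comm {G}.
Arguments Mcomm_mul {G}. Arguments Mcomm_inv {G}.

Lemma hom_one {G1 G2 : MLA} (f : G1 -> G2) :
  (forall x y, f (mul x y) = mul (f x) (f y)) -> f (one G1) = one G2.
Proof.
  intro H. apply (mulK (f (one G1))). rewrite <- H, mul1g, mulg1. reflexivity.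
Qed.

Lemma hom_inv {G1 G2 : MLA} (f : G1 -> G2) :
  (forall x y, f (mul x y) = mul (f x) (f y)) -> forall x, f (inv x) = inv (f x).
Proof.
  intros H x. apply inv_uniq. rewrite <- H, mulVg. apply (hom_one f H).
Qed.

Theorem lemma4p2 (H1 G1 K1 H2 G2 K2 : MLA)
  (a1 : H1 -> G1) (b1 : G1 -> K1) (a2 : H2 -> G2) (b2 : G2 -> K2)
  (lam : K1 -> K2) (mu : G1 -> G2) :
  central_ext a1 b1 -> central_ext a2 b2 ->
  isoclinic a1 b1 a2 b2 lam mu ->
  (forall x : G1, Mcomm x -> lam (b1 x) = b2 (mu x)) /\
  (forall (x g1 : G1) (g2 : G2), Mcomm x -> lam (b1 g1) = b2 g2 ->
     mu (Mbr x g1) = Mbr (mu x) g2) /\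
  (forall y : G2,
     (exists x : G1, (exists h, a1 h = x) /\ Mcomm x /\ mu x = y) <->
     ((exists h, a2 h = y) /\ Mcomm y)).
Proof.
  intros [_ [[b1m b1s] [_ [b1sur [b1ker _]]]]] [_ [[b2m b2s] [_ [b2sur [b2ker _]]]]]
         [[[lm ls] [linj lsur]] [[muM [mum [mus [muinj musur]]]] iso]].
  assert (mu1 : mu (one G1) = one G2).
  { apply (mulK (mu (one G1))). rewrite <- mum by apply Mcomm_one.
    rewrite mul1g, mulg1. reflexivity. }
  assert (muinv : forall x, Mcomm x -> mu (inv x) = inv (mu x)).
  { intros x Hx. apply inv_uniq. rewrite <- mum, mulVg; auto. apply Mcomm_inv; auto. }
  set (Q := fun x : G1 => Mcomm x /\ lam (b1 x) = b2 (mu x)).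
  assert (Q1 : Q (one G1)).
  { split. apply Mcomm_one. rewrite mu1, (hom_one b1 b1m), (hom_one lam lm), (hom_one b2 b2m).
    reflexivity. }
  assert (QM : forall x y, Q x -> Q y -> Q (mul x y)).
  { intros x y [Hx Ex] [Hy Ey]. split. apply Mcomm_mul; auto.
    rewrite mum, b1m, lm, b2m, Ex, Ey; auto. }
  assert (QI : forall x, Q x -> Q (inv x)).
  { intros x [Hx Ex]. split. apply Mcomm_inv; auto.
    rewrite muinv, (hom_inv b1 b1m), (hom_inv lam lm), (hom_inv b2 b2m), Ex; auto. }
  assert (Qg : forall P : G1 -> Prop, (forall x, P x -> Q x) -> forall x, gen P x -> Q x).
  { intros P HP x Hx. induction Hx; auto. }
  assert (P1 : forall x : G1, Mcomm x -> lam (b1 x) = b2 (mu x)).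
  { intros x [a [b [Ha [Hb ->]]]].
    apply star_ideal_gen in Ha. apply comm_subgroup_gen in Hb.
    apply QM.
    - revert Ha. apply Qg. intros x [c [d ->]]. split. apply Mcomm_star.
      destruct (b2sur (lam (b1 c))) as [h Hh]. destruct (b2sur (lam (b1 d))) as [h' Hh'].
      destruct (iso c d h h' Hh Hh') as [_ E]. rewrite E, b1s, ls, b2s, Hh, Hh'.
      reflexivity.
    - revert Hb. apply Qg. intros x [c [d ->]]. split. apply Mcomm_comm.
      destruct (b2sur (lam (b1 c))) as [h Hh]. destruct (b2sur (lam (b1 d))) as [h' Hh'].
      destruct (iso c d h h' Hh Hh') as [E _]. rewrite E. unfold comm.
      rewrite !b1m, !lm, !b2m, !(hom_inv b1 b1m), !(hom_inv lam lm), !(hom_inv b2 b2m), Hh, Hh'.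
      reflexivity. }
  split; [exact P1|split].
  - intros x g1 g2 Hx Hg. unfold Mbr. rewrite mum by (apply Mcomm_star || apply Mcomm_comm).
    destruct (iso x g1 (mu x) g2 (eq_sym (P1 x Hx)) (eq_sym Hg)) as [E1 E2].
    rewrite E1, E2. reflexivity.
  - intro y. split.
    + intros [x [[h <-] [Hx <-]]]. split; [|apply muM; auto].
      apply b2ker. rewrite <- P1 by auto.
      assert (b1 (a1 h) = one K1) as -> by (apply b1ker; eauto).
      apply (hom_one lam lm).
    + intros [[h <-] Hy]. destruct (musur _ Hy) as [x [Hx Ex]].
      exists x. split; [|auto]. apply b1ker. apply linj.
      rewrite P1, Ex, (hom_one lam lm) by auto. apply b2ker. eauto.
Qed.
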